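(* For every $j\in\mathbb Z$: (1) $\pi_j:X_j\to X_{j+1}$ is injective on the $1$-skeleton of $X_j$. (2) If $p$ is a $0$-cell of $X_j$ then $\pi_j^{-1}(\pi_j(p))=\{p\}$. (3) For every $p\in X_j$, $(\hat\pi^j)^{-1}(p)$ has at most $3$ points. (4) The link of every cell of $X_j$ contains at most $24$ cells. (5) For every $0$-cell $v$ of $X_j$, any two cells $\sigma,\sigma'$ of $X_j$ containing $v$ can be joined by a sequence $\sigma=\tau_1,\dots,\tau_\ell=\sigma'$ of cells of $X_j$ containing $v$, with $\tau_{i-1}$ and $\tau_i$ sharing a $1$-cell. (6) Every cell of $X_j$ contains at most $9$ open cells. (7) For every $N$ there is $C(N)$, independent of $j$, such that every combinatorial $N$-ball in $X_j$ contains at most $C(N)$ cells. (8) For every $2$-cell $\sigma$ of $X_j$, $(\hat\pi^j)^{-1}(\sigma)$ can be covered by at most $27$ $2$-cells of $Y_j$.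
   Context: Standing construction ($n=2$). Fix an integer $L\ge100$, $m=4$, $m_v=3L$. For $j\in\mathbb Z$, $Y_j$ is the cell complex on $\mathbb R^2$ given by the tiling by rectangles $[am^{-j},(a+1)m^{-j}]\times[bm_v^{-j},(b+1)m_v^{-j}]$, $a,b\in\mathbb Z$. Let $\Phi(x,y)=(m^{-1}x,m_v^{-1}y)$. For $k,\ell\in\mathbb Z$, $i\in\{1,2,3\}$, let $a_{k,\ell,i}=\{k+\tfrac i4\}\times[(3\ell+i-1)m_v^{-1},(3\ell+i)m_v^{-1}]$. $\mathcal R$ is the equivalence relation on $\mathbb R^2$ generated by $p\sim p+(0,m_v^{-1})$ for $p\in a_{k,\ell,i}$. $\Phi^j_*\mathcal R=\{(\Phi^jp,\Phi^jq):(p,q)\in\mathcal R\}$; $\mathcal R_j$ is generated by $\Phi^i_*\mathcal R$, $i<j$. $X_j=\mathbb R^2/\mathcal R_j$, $\hat\pi^j$ the quotient map, $\pi_j:X_j\to X_{j+1}$ the induced map. $X_j$ carries the CW structure whose open cells are the images under $\hat\pi^j$ of open cells of $Y_j$. A combinatorial $N$-ball in $X_j$ is the union of the closed cells reachable from a given cell by a chain (consecutive members intersect) of at most $N$ closed cells. *)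

(* Defs.v *)
From Stdlib Require Import Reals Lra Lia ZArith List Relations.
Open Scope R_scope.

Definition pt := (R * R)%type.

Definition m_h : R := 4.
Definition m_v (L : Z) : R := 3 * IZR L.

Definition PhiZ (L i : Z) (p : pt) : pt :=
  (fst p * powerRZ m_h (- i), snd p * powerRZ (m_v L) (- i)).

Definition in_a (L k l i : Z) (p : pt) : Prop :=
  fst p = IZR k + IZR i / 4 /\
  IZR (3 * l + i - 1) / m_v L <= snd p <= IZR (3 * l + i) / m_v L.

Definition gen0 (L : Z) (p q : pt) : Prop :=
  exists k l i : Z, (1 <= i <= 3)%Z /\ in_a L k l i p /\
    q = (fst p, snd p + / m_v L).

Definition Rrel (L : Z) : relation pt := clos_refl_sym_trans pt (gen0 L).

Definition PhiStar (L i : Z) (Rl : relation pt) : relation pt :=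
  fun p' q' => exists p q, Rl p q /\ p' = PhiZ L i p /\ q' = PhiZ L i q.

(** R_j : generated by Phi^i_* R, i < j.  X_j = R^2 / R_j; a point of X_j is an
    R_j-class and pihat^j maps p to its class.  Subsets of X_j are represented
    by their (saturated) preimages in R^2. *)
Definition Rj (L j : Z) : relation pt :=
  clos_refl_sym_trans pt (fun p q => exists i : Z, (i < j)%Z /\ PhiStar L i (Rrel L) p q).

Inductive ctype := CV (* vertex *) | CH (* horizontal edge *)
                 | CVt (* vertical edge *) | CF (* face *).
Definition cell := (ctype * Z * Z)%type.

Definition cdim (c : cell) : nat :=
  match c with (CV,_,_) => 0%nat | (CH,_,_) => 1%nat | (CVt,_,_) => 1%nat | (CF,_,_) => 2%nat end.

Definition sx (j : Z) : R := powerRZ m_h (- j).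
Definition sy (L j : Z) : R := powerRZ (m_v L) (- j).

(** Open cells of Y_j (the tiling by rectangles [a m^-j,(a+1)m^-j] x [b m_v^-j,(b+1)m_v^-j]). *)
Definition openY (L j : Z) (c : cell) (p : pt) : Prop :=
  let '(t, a, b) := c in
  let x := fst p in let y := snd p in
  match t with
  | CV => x = IZR a * sx j /\ y = IZR b * sy L j
  | CH => IZR a * sx j < x < IZR (a + 1) * sx j /\ y = IZR b * sy L j
  | CVt => x = IZR a * sx j /\ IZR b * sy L j < y < IZR (b + 1) * sy L j
  | CF => IZR a * sx j < x < IZR (a + 1) * sx j /\
          IZR b * sy L j < y < IZR (b + 1) * sy L j
  end.

Definition closedY (L j : Z) (c : cell) (p : pt) : Prop :=
  let '(t, a, b) := c in
  let x := fst p in let y := snd p in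
  match t with
  | CV => x = IZR a * sx j /\ y = IZR b * sy L j
  | CH => IZR a * sx j <= x <= IZR (a + 1) * sx j /\ y = IZR b * sy L j
  | CVt => x = IZR a * sx j /\ IZR b * sy L j <= y <= IZR (b + 1) * sy L j
  | CF => IZR a * sx j <= x <= IZR (a + 1) * sx j /\
          IZR b * sy L j <= y <= IZR (b + 1) * sy L j
  end.

(** Preimage under pihat^j of the image under pihat^j of a set (saturation). *)
Definition sat (L j : Z) (A : pt -> Prop) (q : pt) : Prop :=
  exists p, A p /\ Rj L j p q.

(** Open cell of X_j with index c (as preimage in R^2), and its closed cell
    (image of the closed cell of Y_j = closure in X_j). *)
Definition Xopen (L j : Z) (c : cell) : pt -> Prop := sat L j (openY L j c).
Definition Xclosed (L j : Z) (c : cell) : pt -> Prop := sat L j (closedY L j c).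

Definition subset (A B : pt -> Prop) : Prop := forall q, A q -> B q.
Definition seteq (A B : pt -> Prop) : Prop := forall q, A q <-> B q.

Definition atmost_distinct (n : nat) (P : cell -> Prop) (S : cell -> pt -> Prop) : Prop :=
  exists l : list cell, (length l <= n)%nat /\
    forall c, P c -> exists c', In c' l /\ seteq (S c) (S c').

Definition skel1 (L j : Z) (q : pt) : Prop :=
  exists c, (cdim c <= 1)%nat /\ Xopen L j c q.

Definition in_link (L j : Z) (c d : cell) : Prop :=
  ~ seteq (Xopen L j d) (Xopen L j c) /\ subset (Xopen L j c) (Xclosed L j d).

Definition adj_at (L j : Z) (v d d' : cell) : Prop :=
  subset (Xopen L j v) (Xclosed L j d) /\ subset (Xopen L j v) (Xclosed L j d') /\
  exists e, cdim e = 1%nat /\ subset (Xopen L j e) (Xclosed L j d) /\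
            subset (Xopen L j e) (Xclosed L j d').

Definition meet (L j : Z) (c d : cell) : Prop :=
  exists q, Xclosed L j c q /\ Xclosed L j d q.

Fixpoint reach (L j : Z) (c0 : cell) (n : nat) (c : cell) : Prop :=
  match n with
  | O => False
  | S n' => c = c0 \/ exists d, reach L j c0 n' d /\ meet L j d c
  end.

Definition ball (L j : Z) (c0 : cell) (N : nat) (q : pt) : Prop :=
  exists c, reach L j c0 N c /\ Xclosed L j c q.

(* Main.v *)
Require Import Defs.
From Stdlib Require Import Reals ZArith List Relations Lra Lia Classical Setoid.
Open Scope R_scope.

Definition lev (X:R) (e k s:Z) := (0<=e)%Z /\ (1<=s<=3)%Z /\ X = IZR (4^e*(4*k+s)).
Definition inblk (L e s l:Z) (Y:R) :=
  IZR ((3*L)^e*(3*l+s-1)) <= Y <= IZR ((3*L)^e*(3*l+s+1)).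
Definition E (L:Z) (P Q:pt) := fst P = fst Q /\ (snd P = snd Q \/
  exists e k s l n, lev (fst P) e k s /\ inblk L e s l (snd P) /\ inblk L e s l (snd Q)
   /\ snd Q = snd P + IZR (n*(3*L)^e)).

Lemma lev_uniq X e k s e' k' s' : lev X e k s -> lev X e' k' s' -> e=e' /\ k=k' /\ s=s'.
Proof.
  intros [He [Hs HX]] [He' [Hs' HX']]. rewrite HX in HX'. apply eq_IZR in HX'.
  assert (Hgen: forall e k s e' k' s', (0<=e)%Z -> (e < e')%Z -> (1<=s<=3)%Z ->
     (4^e*(4*k+s) = 4^e'*(4*k'+s'))%Z -> False).
  { clear. intros e k s e' k' s' He Hlt Hs H.
    replace e' with (e + 1 + (e'-e-1))%Z in H by lia.
    rewrite !Z.pow_add_r in H by lia.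
    assert (0 < 4^e)%Z by (apply Z.pow_pos_nonneg; lia).
    set (w := (4^(e'-e-1))%Z) in H.
    assert (4*k+s = 4*(w*(4*k'+s')))%Z.
    { apply (Z.mul_cancel_l _ _ (4^e)%Z). lia. rewrite H. rewrite Z.pow_1_r. ring. }
    set (t := (w*(4*k'+s'))%Z) in *. lia. }
  destruct (Z.lt_trichotomy e e') as [Hl|[Hq|Hl]].
  - exfalso. exact (Hgen e k s e' k' s' He Hl Hs HX').
  - subst e'. assert (0 < 4^e)%Z by (apply Z.pow_pos_nonneg; lia).
    assert (4*k+s = 4*k'+s')%Z by (apply (Z.mul_cancel_l _ _ (4^e)%Z); lia).
    lia.
  - exfalso. exact (Hgen e' k' s' e k s He' Hl Hs' (eq_sym HX')).
Qed.

Lemma Mpos L e : (1 <= L)%Z -> (0 <= e)%Z -> (0 < (3*L)^e)%Z.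
Proof. intros; apply Z.pow_pos_nonneg; lia. Qed.

Lemma blk_uniq L e s l l' Y : (1<=L)%Z -> (0<=e)%Z -> inblk L e s l Y -> inblk L e s l' Y -> l = l'.
Proof.
  intros HL He [H1 H2] [H3 H4]. pose proof (Mpos L e HL He).
  assert (A: ((3*L)^e*(3*l+s-1) <= (3*L)^e*(3*l'+s+1))%Z) by (apply le_IZR; lra).
  assert (B: ((3*L)^e*(3*l'+s-1) <= (3*L)^e*(3*l+s+1))%Z) by (apply le_IZR; lra).
  apply Z.mul_le_mono_pos_l in A; [|lia]. apply Z.mul_le_mono_pos_l in B; [|lia]. lia.
Qed.

Lemma E_refl L P : E L P P.
Proof. split; auto. Qed.

Lemma E_sym L P Q : E L P Q -> E L Q P.
Proof.
  intros [H1 [H2|(e&k&s&l&n&Hl&Hb1&Hb2&Hy)]]; split; auto.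
  right. exists e, k, s, l, (-n)%Z. rewrite <- H1. split; [auto|split;[auto|split;[auto|]]].
  rewrite Hy. rewrite !mult_IZR, opp_IZR. ring.
Qed.

Lemma E_trans L P Q R : (1<=L)%Z -> E L P Q -> E L Q R -> E L P R.
Proof.
  intros HL [H1 H2] [H3 H4]. split; [congruence|].
  destruct H2 as [H2|(e&k&s&l&n&Hl&Hb1&Hb2&Hy)];
  destruct H4 as [H4|(e'&k'&s'&l'&n'&Hl'&Hb1'&Hb2'&Hy')].
  - left; congruence.
  - right. exists e', k', s', l', n'. rewrite H1, H2. auto.
  - right. exists e, k, s, l, n. rewrite <- H4. auto.
  - right. rewrite <- H1 in Hl'. destruct (lev_uniq _ _ _ _ _ _ _ Hl Hl') as (->&->&->).
    assert (l = l'). { destruct Hl as [He _]. eapply blk_uniq; eauto. } subst l'.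
    exists e', k', s', l, (n+n')%Z. split; [auto|split;[auto|split;[auto|]]].
    rewrite Hy', Hy. rewrite !mult_IZR, plus_IZR. ring.
Qed.

Definition u (L j : Z) (p : pt) : pt := (fst p * powerRZ 4 j, snd p * powerRZ (m_v L) j).
Definition v (L j : Z) (P : pt) : pt := (fst P * powerRZ 4 (-j), snd P * powerRZ (m_v L) (-j)).

Lemma mv_IZR L : m_v L = IZR (3*L).
Proof. unfold m_v. rewrite mult_IZR. reflexivity. Qed.

Lemma mv_pos L : (1<=L)%Z -> 0 < m_v L.
Proof. intros. rewrite mv_IZR. apply IZR_lt. lia. Qed.

Lemma pw_cancel r j : r <> 0 -> powerRZ r j * powerRZ r (-j) = 1.
Proof. intros. rewrite <- powerRZ_add by auto. replace (j + -j)%Z with 0%Z by lia. reflexivity. Qed.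

Lemma pw_shift r i j : r <> 0 -> powerRZ r (-i) = r * powerRZ r (j-i-1) * powerRZ r (-j).
Proof.
  intros. replace r with (powerRZ r 1) at 2 by (simpl; ring).
  rewrite <- !powerRZ_add by auto. f_equal. lia.
Qed.

Lemma IZR_pw b e : (0 <= e)%Z -> IZR (b^e) = powerRZ (IZR b) e.
Proof.
  intros. destruct e; simpl; auto. apply Zpower_pos_powerRZ. lia.
Qed.

Lemma uv L j P : (1<=L)%Z -> u L j (v L j P) = P.
Proof.
  intros HL. destruct P as [x y]. unfold u, v; simpl.
  assert (powerRZ 4 (-j) * powerRZ 4 j = 1).
  { rewrite Rmult_comm. apply pw_cancel. lra. }
  assert (powerRZ (m_v L) (-j) * powerRZ (m_v L) j = 1).
  { rewrite Rmult_comm. apply pw_cancel. pose proof (mv_pos L HL). lra. }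
  f_equal; rewrite Rmult_assoc; [rewrite H|rewrite H0]; ring.
Qed.

Lemma vu L j p : (1<=L)%Z -> v L j (u L j p) = p.
Proof.
  intros HL. destruct p as [x y]. unfold u, v; simpl.
  assert (powerRZ 4 j * powerRZ 4 (-j) = 1) by (apply pw_cancel; lra).
  assert (powerRZ (m_v L) j * powerRZ (m_v L) (-j) = 1).
  { apply pw_cancel. pose proof (mv_pos L HL). lra. }
  f_equal; rewrite Rmult_assoc; [rewrite H|rewrite H0]; ring.
Qed.

Lemma u_inj L j p q : (1<=L)%Z -> u L j p = u L j q -> p = q.
Proof. intros HL H. rewrite <- (vu L j p), <- (vu L j q), H; auto. Qed.

Lemma gen_E L i j P Q : (1<=L)%Z -> (i < j)%Z -> gen0 L P Q ->
  E L (u L j (PhiZ L i P)) (u L j (PhiZ L i Q)).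
Proof.
  intros HL Hij (k&l&s&Hs&[Hx [Hy1 Hy2]]&HQ). subst Q.
  unfold u, PhiZ, m_h; simpl. split; [reflexivity|right].
  set (e := (j - i - 1)%Z).
  assert (He: (0 <= e)%Z) by (unfold e; lia).
  pose proof (mv_pos L HL) as HM.
  rewrite (pw_shift 4 i j) by lra. rewrite (pw_shift (m_v L) i j) by lra.
  fold e.
  assert (H4: powerRZ 4 (-j) * powerRZ 4 j = 1) by (rewrite Rmult_comm; apply pw_cancel; lra).
  assert (HMj: powerRZ (m_v L) (-j) * powerRZ (m_v L) j = 1) by (rewrite Rmult_comm; apply pw_cancel; lra).
  assert (HA: powerRZ 4 e = IZR (4^e)) by (rewrite IZR_pw; auto).
  assert (HB: powerRZ (m_v L) e = IZR ((3*L)^e)) by (rewrite IZR_pw, mv_IZR; auto).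
  rewrite HA, HB.
  pose proof (Mpos L e HL He) as HMe. apply IZR_lt in HMe.
  set (B := IZR ((3*L)^e)) in *.
  set (y := snd P) in *.
  assert (Hyl: IZR (3*l+s-1) <= y * m_v L).
  { apply (Rmult_le_compat_r (m_v L)) in Hy1; [|lra].
    replace (IZR (3*l+s-1) / m_v L * m_v L) with (IZR (3*l+s-1)) in Hy1 by (field; lra). lra. }
  assert (Hyu: y * m_v L <= IZR (3*l+s)).
  { apply (Rmult_le_compat_r (m_v L)) in Hy2; [|lra].
    replace (IZR (3*l+s) / m_v L * m_v L) with (IZR (3*l+s)) in Hy2 by (field; lra). lra. }
  assert (Hrw: y * (m_v L * B * powerRZ (m_v L) (-j)) * powerRZ (m_v L) j
     = B * (y * m_v L)).
  { transitivity (y * m_v L * B * (powerRZ (m_v L) (-j) * powerRZ (m_v L) j)); [ring|].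
    rewrite HMj. ring. }
  exists e, k, s, l, 1%Z. split; [|split; [|split]].
  - refine (conj He (conj Hs _)).
    cbn [fst].     transitivity (fst P * 4 * IZR (4^e) * (powerRZ 4 (-j) * powerRZ 4 j)). ring. 
    rewrite H4, Hx. rewrite !mult_IZR, !plus_IZR, !mult_IZR. field.
  - unfold inblk. rewrite Hrw. rewrite !(mult_IZR ((3*L)^e)). fold B.
    assert (IZR (3*l+s) <= IZR (3*l+s+1)) by (apply IZR_le; lia).
    split; apply Rmult_le_compat_l; lra.
  - unfold inblk.
    replace ((y + / m_v L) * (m_v L * B * powerRZ (m_v L) (-j)) * powerRZ (m_v L) j)
      with (B * (y * m_v L + 1)).
    2:{ transitivity ((y * m_v L + 1) * B * (powerRZ (m_v L) (-j) * powerRZ (m_v L) j)).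
        2: field; lra. rewrite HMj. ring. }
    rewrite !(mult_IZR ((3*L)^e)). fold B.
    assert (IZR (3*l+s-1) <= IZR (3*l+s-1) + 1) by lra.
    assert (IZR (3*l+s+1) = IZR (3*l+s) + 1) by (rewrite <- plus_IZR; f_equal; lia).
    split; apply Rmult_le_compat_l; lra.
  - replace ((y + / m_v L) * (m_v L * B * powerRZ (m_v L) (-j)) * powerRZ (m_v L) j)
      with (B * (y * m_v L) + B).
    2:{ transitivity ((y * m_v L + 1) * B * (powerRZ (m_v L) (-j) * powerRZ (m_v L) j)).
        2: field; lra. rewrite HMj. ring. }
    cbn [snd]. rewrite Hrw. rewrite mult_IZR. fold B. ring.
Qed.

Lemma step_Rj L j p q e k s l : (1<=L)%Z -> fst p = fst q ->
  lev (fst p * powerRZ 4 j) e k s ->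
  IZR ((3*L)^e*(3*l+s-1)) <= snd p * powerRZ (m_v L) j <= IZR ((3*L)^e*(3*l+s)) ->
  snd q * powerRZ (m_v L) j = snd p * powerRZ (m_v L) j + IZR ((3*L)^e) ->
  Rj L j p q.
Proof.
  intros HL Hf [He [Hs Hx]] [Hy1 Hy2] Hq.
  destruct p as [x y]; destruct q as [x' y']; cbn [fst snd] in *. subst x'.
  pose proof (mv_pos L HL) as HM.
  pose proof (Mpos L e HL He) as HMe. apply IZR_lt in HMe.
  set (i := (j - e - 1)%Z).
  assert (HA: powerRZ 4 e = IZR (4^e)) by (rewrite IZR_pw; auto).
  assert (HB: powerRZ (m_v L) e = IZR ((3*L)^e)) by (rewrite IZR_pw, mv_IZR; auto).
  set (B := IZR ((3*L)^e)) in *. set (A := IZR (4^e)) in *.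
  assert (HAp: 0 < A) by (unfold A; apply IZR_lt, Z.pow_pos_nonneg; lia).
  set (Y := y * powerRZ (m_v L) j) in *.
  set (P := (IZR k + IZR s / 4, Y / (B * m_v L))).
  set (Q := (IZR k + IZR s / 4, Y / (B * m_v L) + / m_v L)).
  apply rst_step. exists i. split; [unfold i; lia|].
  exists P, Q. split; [|split].
  - apply rst_step. exists k, l, s. split; auto. split; [|reflexivity].
    unfold in_a, P, Q. cbn [fst snd]. split; auto.
    rewrite !(mult_IZR ((3*L)^e)) in *. fold B in Hy1, Hy2.
    split.
    + replace (Y / (B * m_v L)) with ((Y/B) * / m_v L) by (field; lra). unfold Rdiv.
      apply Rmult_le_compat_r; [left; apply Rinv_0_lt_compat; lra|].
      apply (Rmult_le_reg_l B); [lra|]. replace (B * (Y * / B)) with Y by (field; lra). lra.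
    + replace (Y / (B * m_v L)) with ((Y/B) * / m_v L) by (field; lra). unfold Rdiv.
      apply Rmult_le_compat_r; [left; apply Rinv_0_lt_compat; lra|].
      apply (Rmult_le_reg_l B); [lra|]. replace (B * (Y * / B)) with Y by (field; lra). lra.
  - unfold PhiZ, m_h, P. cbn [fst snd].
    rewrite (pw_shift 4 i j) by lra. rewrite (pw_shift (m_v L) i j) by lra.
    replace (j - i - 1)%Z with e by (unfold i; lia). rewrite HA, HB.
    f_equal.
    + rewrite <- (Rmult_1_r x). rewrite <- (pw_cancel 4 j) by lra.
      rewrite <- Rmult_assoc, Hx. rewrite !mult_IZR, !plus_IZR, !mult_IZR. fold A. field.
    + rewrite <- (Rmult_1_r y). rewrite <- (pw_cancel (m_v L) j) by lra.
      rewrite <- Rmult_assoc. fold Y. field. split; lra.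
  - unfold PhiZ, m_h, Q. cbn [fst snd].
    rewrite (pw_shift 4 i j) by lra. rewrite (pw_shift (m_v L) i j) by lra.
    replace (j - i - 1)%Z with e by (unfold i; lia). rewrite HA, HB.
    f_equal.
    + rewrite <- (Rmult_1_r x). rewrite <- (pw_cancel 4 j) by lra.
      rewrite <- Rmult_assoc, Hx. rewrite !mult_IZR, !plus_IZR, !mult_IZR. fold A. field.
    + rewrite <- (Rmult_1_r y'). rewrite <- (pw_cancel (m_v L) j) by lra.
      rewrite <- Rmult_assoc, Hq. fold Y. field. split; lra.
Qed.

Lemma Rj_to_E L j p q : (1<=L)%Z -> Rj L j p q -> E L (u L j p) (u L j q).
Proof.
  intros HL H. induction H as [p q Hpq| p | p q _ IH | p q r _ IH1 _ IH2].
  - destruct Hpq as [i [Hij (P&Q&HPQ&->&->)]].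
    induction HPQ as [P Q G| P | P Q _ IH | P Q R _ IH1 _ IH2].
    + apply gen_E; auto.
    + apply E_refl.
    + apply E_sym; auto.
    + eapply E_trans; eauto.
  - apply E_refl.
  - apply E_sym; auto.
  - eapply E_trans; eauto.
Qed.

Lemma step_Rj' L j p q e k s l : (1<=L)%Z -> fst p = fst q ->
  lev (fst p * powerRZ 4 j) e k s ->
  IZR ((3*L)^e) * IZR (3*l+s-1) <= snd p * powerRZ (m_v L) j <= IZR ((3*L)^e) * IZR (3*l+s) ->
  snd q * powerRZ (m_v L) j = snd p * powerRZ (m_v L) j + IZR ((3*L)^e) ->
  Rj L j p q.
Proof.
  intros. eapply step_Rj with (l:=l); eauto. rewrite !(mult_IZR ((3*L)^e)). auto.
Qed.

Lemma E_to_Rj L j p q : (1<=L)%Z -> E L (u L j p) (u L j q) -> Rj L j p q.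
Proof.
  intros HL [Hf [Hs | (e&k&s&l&n&Hl&Hb1&Hb2&Hy)]].
  - assert (p = q) as ->. { apply (u_inj L j); auto. destruct (u L j p), (u L j q); simpl in *; congruence. }
    apply rst_refl.
  - unfold u in Hf, Hl, Hb1, Hb2, Hy. cbn [fst snd] in *.
    pose proof (mv_pos L HL) as HM.
    assert (Hfx: fst p = fst q).
    { apply (Rmult_eq_reg_r (powerRZ 4 j)); auto. apply powerRZ_NOR. lra. }
    destruct Hl as [He Hl'].
    pose proof (Mpos L e HL He) as HMe. apply IZR_lt in HMe.
    unfold inblk in *. rewrite !(mult_IZR ((3*L)^e)) in *. rewrite mult_IZR in Hy.
    set (B := IZR ((3*L)^e)) in *.
    set (Y := snd p * powerRZ (m_v L) j) in *.
    set (Y' := snd q * powerRZ (m_v L) j) in *.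
    assert (Hc1: IZR (3*l+s-1) = IZR (3*l+s) - 1) by (rewrite <- minus_IZR; f_equal).
    assert (Hc2: IZR (3*l+s+1) = IZR (3*l+s) + 1) by (rewrite <- plus_IZR; f_equal).
    rewrite Hc1, Hc2 in *. set (c := IZR (3*l+s)) in *.
    set (N := IZR n) in *.
    assert (Hn1: N <= 2).
    { apply (Rmult_le_reg_r B); auto. nra. }
    assert (Hn2: -2 <= N).
    { apply (Rmult_le_reg_r B); auto. nra. }
    assert (Hnz: (-2 <= n <= 2)%Z) by (unfold N in *; split; apply le_IZR; lra).
    set (r := (fst p, snd p + B * powerRZ (m_v L) (-j))).
    assert (Hr: snd r * powerRZ (m_v L) j = Y + B).
    { unfold r, Y. cbn [snd]. rewrite Rmult_plus_distr_r, Rmult_assoc.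
      rewrite (Rmult_comm (powerRZ _ (-j))), pw_cancel by lra. ring. }
    assert (Hl2: lev (fst p * powerRZ 4 j) e k s) by (split; auto).
    assert (Hl3: lev (fst q * powerRZ 4 j) e k s) by (rewrite <- Hfx; split; auto).
    assert (Hl4: lev (fst r * powerRZ 4 j) e k s) by (unfold r; cbn [fst]; split; auto).
    assert (n = -2 \/ n = -1 \/ n = 0 \/ n = 1 \/ n = 2)%Z as Hcase by lia.
    destruct Hcase as [Hn|[Hn|[Hn|[Hn|Hn]]]]; subst n; unfold N in *.
    +
      set (r2 := (fst q, snd q + B * powerRZ (m_v L) (-j))).
      assert (Hr2: snd r2 * powerRZ (m_v L) j = Y' + B).
      { unfold r2, Y'. cbn [snd]. rewrite Rmult_plus_distr_r, Rmult_assoc.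
        rewrite (Rmult_comm (powerRZ _ (-j))), pw_cancel by lra. ring. }
      apply rst_sym. apply rst_trans with r2.
      * apply step_Rj' with (e:=e) (k:=k) (s:=s) (l:=l); auto; fold B Y'; rewrite ?Hc1; fold c; nra.
      * apply step_Rj' with (e:=e) (k:=k) (s:=s) (l:=l); unfold r2 in *; cbn [fst snd] in *; auto;
          fold B Y Y'; rewrite ?Hc1; fold c; nra.
    + apply rst_sym. apply step_Rj' with (e:=e) (k:=k) (s:=s) (l:=l); auto;
          fold B Y Y'; rewrite ?Hc1; fold c; nra.
    + assert (p = q) as ->.
      { destruct p, q; cbn [fst snd] in *. f_equal; auto.
        apply (Rmult_eq_reg_r (powerRZ (m_v L) j)). unfold Y, Y' in *. lra.
        apply powerRZ_NOR. lra. }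
      apply rst_refl.
    + apply step_Rj' with (e:=e) (k:=k) (s:=s) (l:=l); auto;
          fold B Y Y'; rewrite ?Hc1; fold c; nra.
    + apply rst_trans with r.
      * apply step_Rj' with (e:=e) (k:=k) (s:=s) (l:=l); auto; fold B Y; rewrite ?Hc1; fold c; nra.
      * apply step_Rj' with (e:=e) (k:=k) (s:=s) (l:=l); unfold r in *; cbn [fst snd] in *; auto;
          fold B Y Y'; rewrite ?Hc1; fold c; nra.
Qed.

Lemma Rj_E L j p q : (1<=L)%Z -> Rj L j p q <-> E L (u L j p) (u L j q).
Proof. split; [apply Rj_to_E|apply E_to_Rj]; auto. Qed.

Lemma E_F1 L P Q : E L P Q -> fst Q = fst P /\ exists z:Z, snd Q = snd P + IZR z.
Proof.
  intros [H1 [H2|(e&k&s&l&n&_&_&_&Hy)]]; split; auto.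
  - exists 0%Z. rewrite H2. simpl. ring.
  - exists (n*(3*L)^e)%Z. auto.
Qed.

Lemma E_F2 L P Q : E L P Q -> (forall a, fst P <> IZR a) -> Q = P.
Proof.
  intros [H1 [H2|(e&k&s&l&n&[_ [_ Hx]]&_&_&_)]] Hn.
  - destruct P, Q; cbn [fst snd] in *; subst; auto.
  - exfalso. eapply Hn; eauto.
Qed.

Lemma n_bound L e s l Y n : (1<=L)%Z -> (0<=e)%Z -> inblk L e s l Y ->
  inblk L e s l (Y + IZR (n*(3*L)^e)) -> (-2 <= n <= 2)%Z.
Proof.
  intros HL He [H1 H2] [H3 H4]. pose proof (Mpos L e HL He) as HM. apply IZR_lt in HM.
  rewrite !(mult_IZR ((3*L)^e)) in *. rewrite mult_IZR in *.
  set (B := IZR ((3*L)^e)) in *.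
  assert (Hc1: IZR (3*l+s-1) = IZR (3*l+s) - 1) by (rewrite <- minus_IZR; f_equal).
  assert (Hc2: IZR (3*l+s+1) = IZR (3*l+s) + 1) by (rewrite <- plus_IZR; f_equal).
  rewrite Hc1, Hc2 in *. set (c := IZR (3*l+s)) in *.
  assert (IZR n <= 2) by (apply (Rmult_le_reg_r B); auto; nra).
  assert (-2 <= IZR n) by (apply (Rmult_le_reg_r B); auto; nra).
  split; apply le_IZR; lra.
Qed.

Lemma E_SL L X : (1<=L)%Z -> exists U:Z, forall Y Y', E L (X,Y) (X,Y') ->
  exists n, (-2 <= n <= 2)%Z /\ Y' = Y + IZR (n*U).
Proof.
  intros HL. destruct (classic (exists e k s, lev X e k s)) as [(e&k&s&Hl)|Hn].
  - exists ((3*L)^e)%Z. intros Y Y' [_ [H|(e'&k'&s'&l&n&Hl'&Hb1&Hb2&Hy)]].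
    + exists 0%Z. cbn [fst snd] in *. split; [lia|]. rewrite H, Z.mul_0_l. simpl. ring.
    + cbn [fst snd] in *. destruct (lev_uniq _ _ _ _ _ _ _ Hl Hl') as (<-&<-&<-).
      exists n. split; auto. rewrite Hy in Hb2. destruct Hl as [He _].
      exact (n_bound L e s l Y n HL He Hb1 Hb2).
  - exists 0%Z. intros Y Y' [_ [H|(e'&k'&s'&l&n&Hl'&_)]].
    + exists 0%Z. cbn [fst snd] in *. split; [lia|]. rewrite H, Z.mul_0_l. simpl. ring.
    + exfalso. apply Hn. eauto.
Qed.

Lemma E_F3 L P : (1<=L)%Z -> exists zs : list Z, (length zs <= 3)%nat /\
  forall Q, E L P Q -> fst Q = fst P /\ exists z, In z zs /\ snd Q = snd P + IZR z.
Proof.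
  intros HL. destruct P as [X Y].
  destruct (classic (exists e k s l, lev X e k s /\ inblk L e s l Y)) as [(e&k&s&l&Hl&Hb)|Hn].
  - pose proof Hl as [He _].
    pose proof (Mpos L e HL He) as HMz. pose proof HMz as HM. apply IZR_lt in HM.
    assert (Hc1: IZR (3*l+s-1) = IZR (3*l+s) - 1) by (rewrite <- minus_IZR; f_equal).
    assert (Hc2: IZR (3*l+s+1) = IZR (3*l+s) + 1) by (rewrite <- plus_IZR; f_equal).
    set (Bz := ((3*L)^e)%Z) in *. set (B := IZR Bz) in *.
    assert (Hgen: forall Q, E L (X,Y) Q -> fst Q = X /\ exists n, snd Q = Y + IZR n * B /\
       B * (IZR (3*l+s) - 1) <= Y + IZR n * B <= B * (IZR (3*l+s) + 1)).
    { intros Q [H1 [H2|(e'&k'&s'&l'&n&Hl'&Hb1&Hb2&Hy)]]; cbn [fst snd] in *.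
      - split; auto. exists 0%Z. rewrite <- H2. split; [change (IZR 0) with 0; ring|].
        destruct Hb as [Hb1 Hb2]. unfold inblk in *. fold Bz in Hb1, Hb2.
        rewrite !(mult_IZR Bz) in *. fold B in Hb1, Hb2. rewrite Hc1, Hc2 in *. change (IZR 0) with 0. lra.
      - split; auto. destruct (lev_uniq _ _ _ _ _ _ _ Hl Hl') as (<-&<-&<-).
        assert (l' = l) as -> by exact (blk_uniq L e s l' l Y HL He Hb1 Hb).
        exists n. rewrite Hy. rewrite mult_IZR. fold Bz B. split; auto.
        destruct Hb2 as [Hb3 Hb4]. rewrite Hy in Hb3, Hb4. fold Bz in Hb3, Hb4.
        rewrite (mult_IZR n Bz), !(mult_IZR Bz) in Hb3, Hb4. fold B in Hb3, Hb4.
        rewrite Hc1 in Hb3. rewrite Hc2 in Hb4. lra. }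
    destruct Hb as [Hb1 Hb2]. fold Bz in Hb1, Hb2. rewrite !(mult_IZR Bz) in *.
    fold B in Hb1, Hb2. rewrite Hc1, Hc2 in *.
    set (c := IZR (3*l+s)) in *.
    destruct (Rlt_le_dec Y (B*c)) as [Hy1|Hy1].
    + exists (0 :: Bz :: 2*Bz :: nil)%Z. split; [simpl; lia|].
      intros Q HQ. destruct (Hgen Q HQ) as [Hf (n&Hn&Hr)]. split; auto.
      assert (-1 < IZR n) by (apply (Rmult_lt_reg_r B); auto; nra).
      assert (IZR n <= 2) by (apply (Rmult_le_reg_r B); auto; nra).
      assert (Hnz: (0 <= n <= 2)%Z) by (split; [apply lt_IZR in H; lia | apply le_IZR; lra]).
      exists (n*Bz)%Z. rewrite mult_IZR. split; auto.
      assert (Hc: (n = 0 \/ n = 1 \/ n = 2)%Z) by lia. cbn [In]. lia.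
    + destruct (Rlt_le_dec Y (B*(c+1))) as [Hy2|Hy2].
      * exists (-Bz :: 0 :: Bz :: nil)%Z. split; [simpl; lia|].
        intros Q HQ. destruct (Hgen Q HQ) as [Hf (n&Hn&Hr)]. split; auto.
        assert (-2 < IZR n) by (apply (Rmult_lt_reg_r B); auto; nra).
        assert (IZR n <= 1) by (apply (Rmult_le_reg_r B); auto; nra).
        assert (Hnz: (-1 <= n <= 1)%Z) by (split; [apply lt_IZR in H; lia | apply le_IZR; lra]).
        exists (n*Bz)%Z. rewrite mult_IZR. split; auto.
        assert (Hc: (n = -1 \/ n = 0 \/ n = 1)%Z) by lia. cbn [In]. lia.
      * exists (-2*Bz :: -Bz :: 0 :: nil)%Z. split; [simpl; lia|].
        intros Q HQ. destruct (Hgen Q HQ) as [Hf (n&Hn&Hr)]. split; auto.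
        assert (-2 <= IZR n) by (apply (Rmult_le_reg_r B); auto; nra).
        assert (IZR n <= 0) by (apply (Rmult_le_reg_r B); auto; nra).
        assert (Hnz: (-2 <= n <= 0)%Z) by (split; apply le_IZR; lra).
        exists (n*Bz)%Z. rewrite mult_IZR. split; auto.
        assert (Hc: (n = -2 \/ n = -1 \/ n = 0)%Z) by lia. cbn [In]. lia.
  - exists (0%Z :: nil). split; [simpl; lia|].
    intros Q [H1 [H2|(e&k&s&l&n&Hl&Hb1&Hb2&Hy)]]; cbn [fst snd] in *.
    + split; auto. exists 0%Z. split; [left; reflexivity|]. rewrite <- H2. change (IZR 0) with 0. ring.
    + exfalso. apply Hn. exists e, k, s, l. split; auto.
Qed.

Definition openU (c : cell) (P : pt) : Prop :=
  let '(t, a, b) := c in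
  let x := fst P in let y := snd P in
  match t with
  | CV => x = IZR a /\ y = IZR b
  | CH => IZR a < x < IZR a + 1 /\ y = IZR b
  | CVt => x = IZR a /\ IZR b < y < IZR b + 1
  | CF => IZR a < x < IZR a + 1 /\ IZR b < y < IZR b + 1
  end.

Definition closedU (c : cell) (P : pt) : Prop :=
  let '(t, a, b) := c in
  let x := fst P in let y := snd P in
  match t with
  | CV => x = IZR a /\ y = IZR b
  | CH => IZR a <= x <= IZR a + 1 /\ y = IZR b
  | CVt => x = IZR a /\ IZR b <= y <= IZR b + 1
  | CF => IZR a <= x <= IZR a + 1 /\ IZR b <= y <= IZR b + 1
  end.

Definition hx (t : ctype) : R := match t with CV | CVt => 0 | _ => /2 end.
Definition hy (t : ctype) : R := match t with CV | CH => 0 | _ => /2 end.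
Definition cen (c : cell) : pt := let '(t,a,b) := c in (IZR a + hx t, IZR b + hy t).
Definition shiftc (c : cell) (z : Z) : cell := let '(t,a,b) := c in (t, a, (b+z)%Z).

Definition star' (c : cell) : list cell :=
  let '(t,a,b) := c in
  match t with
  | CV => (CH,a,b) :: (CH,a-1,b) :: (CVt,a,b) :: (CVt,a,b-1) :: (CF,a,b) :: (CF,a-1,b)
          :: (CF,a,b-1) :: (CF,a-1,b-1) :: nil
  | CH => (CF,a,b) :: (CF,a,b-1) :: nil
  | CVt => (CF,a,b) :: (CF,a-1,b) :: nil
  | CF => nil
  end%Z.

Definition faces (c : cell) : list cell :=
  let '(t,a,b) := c in
  match t with
  | CV => c :: nil
  | CH => c :: (CV,a,b) :: (CV,a+1,b) :: nil
  | CVt => c :: (CV,a,b) :: (CV,a,b+1) :: nil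
  | CF => c :: (CV,a,b) :: (CV,a+1,b) :: (CV,a,b+1) :: (CV,a+1,b+1) :: (CH,a,b) :: (CH,a,b+1)
          :: (CVt,a,b) :: (CVt,a+1,b) :: nil
  end%Z.

Lemma star'_len c : (length (star' c) <= 8)%nat.
Proof. destruct c as [[[] a] b]; simpl; lia. Qed.
Lemma faces_len c : (length (faces c) <= 9)%nat.
Proof. destruct c as [[[] a] b]; simpl; lia. Qed.

Lemma Zlt_of_R (x y : Z) : IZR x < IZR y + 1 -> (x <= y)%Z.
Proof. intros. rewrite <- plus_IZR in H. apply lt_IZR in H. lia. Qed.

Ltac zf x y :=
  try (assert ((x <= y)%Z) by (apply Zlt_of_R; lra));
  try (assert ((y <= x)%Z) by (apply Zlt_of_R; lra));
  try (assert ((x <= y+1)%Z) by (apply Zlt_of_R; rewrite plus_IZR; lra));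
  try (assert ((y <= x+1)%Z) by (apply Zlt_of_R; rewrite plus_IZR; lra));
  try (assert ((x = y)%Z) by (apply eq_IZR; lra)).

Ltac solve_in := repeat (first [ left; repeat f_equal; lia | right ]).

Lemma star_spec c d : closedU d (cen c) -> d = c \/ In d (star' c).
Proof.
  destruct c as [[t a] b], d as [[t' a'] b'].
  destruct t, t'; unfold closedU, cen, hx, hy; cbn [fst snd]; intros H; zf a a'; zf b b';
  destruct (Z.eq_dec a' a); destruct (Z.eq_dec b' b); cbn [star' In]; try solve_in.
  all: try (exfalso; subst; lra).
  all: try (exfalso; assert (a' = a) by lia; subst; lra).
  all: try (exfalso; assert (b' = b) by lia; subst; lra).
Qed.

Lemma faces_spec c d : closedU c (cen d) -> In d (faces c).
Proof.
  destruct c as [[t a] b], d as [[t' a'] b'].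
  destruct t, t'; unfold closedU, cen, hx, hy; cbn [fst snd]; intros H; zf a a'; zf b b';
  destruct (Z.eq_dec a' a); destruct (Z.eq_dec b' b); cbn [faces In]; try solve_in.
  all: try (exfalso; subst; lra).
  all: try (exfalso; assert (a' = a) by lia; subst; lra).
  all: try (exfalso; assert (b' = b) by lia; subst; lra).
Qed.

Lemma cen_open c : openU c (cen c).
Proof. destruct c as [[[] a] b]; unfold openU, cen, hx, hy; cbn [fst snd]; lra. Qed.

Lemma open_closed c P : openU c P -> closedU c P.
Proof. destruct c as [[[] a] b]; unfold openU, closedU; lra. Qed.

Lemma cen_shift c z : cen (shiftc c z) = (fst (cen c), snd (cen c) + IZR z).
Proof. destruct c as [[t a] b]; unfold cen, shiftc; cbn [fst snd]. rewrite plus_IZR. f_equal. ring. Qed.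

Lemma half_nonint a m : IZR a + /2 <> IZR m.
Proof. intros H. zf a m. assert (a = m) by lia. subst. lra. Qed.

Definition XoU L (c : cell) (Q : pt) := exists P, openU c P /\ E L P Q.
Definition XcU L (c : cell) (Q : pt) := exists P, closedU c P /\ E L P Q.
Definition subU (A B : pt -> Prop) := forall Q, A Q -> B Q.
Definition seqU (A B : pt -> Prop) := forall Q, A Q <-> B Q.

Lemma round_blk L e s l b Y : inblk L e s l (IZR b + /2) -> IZR b < Y < IZR b + 1 -> inblk L e s l Y.
Proof.
  unfold inblk. set (m1 := ((3*L)^e*(3*l+s-1))%Z). set (m2 := ((3*L)^e*(3*l+s+1))%Z).
  intros [H1 H2] [H3 H4].
  assert (m1 <= b)%Z by (apply Zlt_of_R; lra).
  assert (b < m2)%Z.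
  { destruct (Z_lt_le_dec b m2); auto. apply IZR_le in l0. lra. }
  apply IZR_le in H. assert (IZR (b+1) <= IZR m2) by (apply IZR_le; lia).
  rewrite plus_IZR in H5. lra.
Qed.

Lemma Gp L c z : (1<=L)%Z -> E L (cen c) (cen (shiftc c z)) -> forall P, openU c P ->
  openU (shiftc c z) (fst P, snd P + IZR z) /\ E L P (fst P, snd P + IZR z).
Proof.
  intros HL HE P HP. rewrite cen_shift in HE.
  destruct c as [[t a] b]. unfold shiftc. destruct P as [x y].
  unfold openU in *. cbn [fst snd] in *. rewrite plus_IZR.
  destruct t.
  - destruct HP as [-> ->]. split; [split; reflexivity|].
    unfold cen, hx, hy in HE. cbn [fst snd] in HE. rewrite !Rplus_0_r in HE. exact HE.
  - apply E_F2 in HE.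
    2:{ unfold cen, hx. cbn [fst]. intros m. apply half_nonint. }
    unfold cen in HE. cbn [fst snd] in HE. injection HE as HE.
    assert (IZR z = 0) by lra. rewrite H. replace (y + 0) with y by ring. split; [lra|apply E_refl].
  - destruct HP as [Hx Hy]. split; [lra|].
    destruct HE as [_ [Hs|(e&k&s&l&n&Hl&Hb1&Hb2&Hyy)]].
    + unfold cen in Hs. cbn [fst snd] in Hs. assert (IZR z = 0) by lra. rewrite H, Rplus_0_r.
      apply E_refl.
    + unfold cen, hx, hy in *. cbn [fst snd] in *. split; [reflexivity|right].
      exists e, k, s, l, n. cbn [fst snd]. split; [rewrite Hx; rewrite Rplus_0_r in Hl; exact Hl|].
      split; [eapply round_blk; eauto|].
      assert (Hz: IZR z = IZR (n * (3*L)^e)) by lra.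
      split; [|rewrite Hz; reflexivity].
      apply (round_blk L e s l (b+z)%Z); rewrite plus_IZR; [replace (IZR b + IZR z + /2) with (IZR b + /2 + IZR z) by ring; exact Hb2 | lra].
  - apply E_F2 in HE.
    2:{ unfold cen, hx. cbn [fst]. intros m. apply half_nonint. }
    unfold cen in HE. cbn [fst snd] in HE. injection HE as HE.
    assert (IZR z = 0) by lra. rewrite H. replace (y + 0) with y by ring. split; [lra|apply E_refl].
Qed.

Lemma shiftc_back c z : shiftc (shiftc c z) (-z) = c.
Proof. destruct c as [[t a] b]. unfold shiftc. f_equal. lia. Qed.

Lemma G L c z : (1<=L)%Z -> E L (cen c) (cen (shiftc c z)) -> seqU (XoU L c) (XoU L (shiftc c z)).
Proof.
  intros HL HE Q. split.
  - intros (P&HP&HPQ). destruct (Gp L c z HL HE P HP) as [H1 H2].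
    exists (fst P, snd P + IZR z). split; auto. eapply E_trans; eauto. apply E_sym; auto.
  - intros (P&HP&HPQ).
    assert (HE': E L (cen (shiftc c z)) (cen (shiftc (shiftc c z) (-z)))).
    { rewrite shiftc_back. apply E_sym; auto. }
    destruct (Gp L _ _ HL HE' P HP) as [H1 H2]. rewrite shiftc_back in H1.
    exists (fst P, snd P + IZR (-z)). split; auto. eapply E_trans; eauto. apply E_sym; auto.
Qed.

Lemma flat_map_len {X Y} (f : X -> list Y) K (l : list X) :
  (forall x, (length (f x) <= K)%nat) -> (length (flat_map f l) <= K * length l)%nat.
Proof.
  intros H. induction l; cbn [flat_map length]; [lia|]. rewrite length_app. specialize (H a). lia.
Qed.

Lemma cen_Xo L c : XoU L c (cen c).
Proof. exists (cen c). split; [apply cen_open|apply E_refl]. Qed.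

Lemma Xc_cen L c d : XcU L c (cen d) -> exists z, closedU c (cen (shiftc d z)) /\ E L (cen d) (cen (shiftc d z)).
Proof.
  intros (P&HP&HE). apply E_sym in HE. pose proof (E_F1 _ _ _ HE) as [H1 [z H2]].
  exists z. rewrite cen_shift. replace (fst (cen d), snd (cen d) + IZR z) with P; auto.
  destruct P; cbn [fst snd] in *; congruence.
Qed.

Lemma L6u L c d : (1<=L)%Z -> XcU L c (cen d) -> exists c', In c' (faces c) /\ seqU (XoU L d) (XoU L c').
Proof.
  intros HL H. destruct (Xc_cen L c d H) as (z&H1&H2).
  exists (shiftc d z). split; [apply faces_spec; auto|]. apply G; auto.
Qed.

Lemma L4u L c : (1<=L)%Z -> exists l, (length l <= 24)%nat /\ forall d,
  ~ seqU (XoU L d) (XoU L c) -> subU (XoU L c) (XcU L d) -> In d l.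
Proof.
  intros HL. destruct (E_F3 L (cen c) HL) as (zs&Hlen&Hzs).
  exists (flat_map (fun z => star' (shiftc c z)) zs). split.
  - pose proof (flat_map_len (fun z => star' (shiftc c z)) 8 zs (fun z => star'_len _)). lia.
  - intros d Hne Hsub. specialize (Hsub _ (cen_Xo L c)).
    destruct Hsub as (P&HP&HE). apply E_sym in HE.
    destruct (Hzs P HE) as [H1 (z&Hz&H2)].
    assert (HPc: P = cen (shiftc c z)).
    { rewrite cen_shift. destruct P; cbn [fst snd] in *; congruence. }
    subst P. destruct (star_spec _ _ HP) as [Hd|Hd].
    + exfalso. apply Hne. subst d. intros Q. symmetry. apply G; auto.
    + apply in_flat_map. exists z. auto.
Qed.

Lemma nonint_between a x : IZR a < x < IZR a + 1 -> forall m, x <> IZR m.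
Proof. intros H m Hm. subst x. zf a m. assert (a = m) by lia. subst. lra. Qed.

Definition fivelist : list Z := (-2 :: -1 :: 0 :: 1 :: 2 :: nil)%Z.

Lemma in_five n : (-2 <= n <= 2)%Z -> In n fivelist.
Proof. intros. unfold fivelist. cbn [In]. lia. Qed.

Lemma L8u L a b : (1<=L)%Z -> exists l : list (Z*Z), (length l <= 27)%nat /\
  forall Q, XcU L (CF,a,b) Q -> exists ab, In ab l /\ closedU (CF, fst ab, snd ab) Q.
Proof.
  intros HL. destruct (E_SL L (IZR a) HL) as [U1 HU1].
  destruct (E_SL L (IZR a + 1) HL) as [U2 HU2].
  exists ((a,b) :: map (fun n => (a, b + n*U1)%Z) fivelist ++ map (fun n => (a, b + n*U2)%Z) fivelist).
  split; [simpl; lia|].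
  intros Q (P&HP&HE). destruct P as [x y]. unfold closedU in HP. cbn [fst snd] in HP.
  pose proof (E_F1 _ _ _ HE) as [Hf _]. destruct Q as [x' y']. cbn [fst snd] in Hf. subst x'.
  destruct HP as [[Hx1 Hx2] Hy].
  destruct (Req_dec x (IZR a)) as [->|Hxa].
  - destruct (HU1 _ _ HE) as (n&Hn&->). exists (a, b+n*U1)%Z. split.
    + right. apply in_or_app. left. apply (in_map (fun n => (a, b + n*U1)%Z)). apply in_five; auto.
    + unfold closedU; cbn [fst snd]. rewrite plus_IZR. lra.
  - destruct (Req_dec x (IZR a + 1)) as [->|Hxa1].
    + destruct (HU2 _ _ HE) as (n&Hn&->). exists (a, b+n*U2)%Z. split.
      * right. apply in_or_app. right. apply (in_map (fun n => (a, b + n*U2)%Z)). apply in_five; auto.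
      * unfold closedU; cbn [fst snd]. rewrite plus_IZR. lra.
    + apply E_F2 in HE. 2:{ cbn [fst]. apply (nonint_between a). lra. }
      injection HE as HE. subst. exists (a,b). split; [left; reflexivity|].
      unfold closedU; cbn [fst snd]. lra.
Qed.

Definition adjU L v d d' := subU (XoU L v) (XcU L d) /\ subU (XoU L v) (XcU L d') /\
  exists e, cdim e = 1%nat /\ subU (XoU L e) (XcU L d) /\ subU (XoU L e) (XcU L d').

Lemma IZR_m1 a : IZR (a - 1) = IZR a - 1.
Proof. rewrite minus_IZR. reflexivity. Qed.
Lemma IZR_p1 a : IZR (a + 1) = IZR a + 1.
Proof. rewrite plus_IZR. reflexivity. Qed.

Lemma open_sub L e d : (forall P, openU e P -> closedU d P) -> subU (XoU L e) (XcU L d).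
Proof. intros H Q (P&HP&HE). exists P. auto. Qed.

Lemma vsub L a b b1 d : (1<=L)%Z -> closedU d (IZR a, IZR b1) -> E L (IZR a, IZR b1) (IZR a, IZR b) ->
  subU (XoU L (CV,a,b)) (XcU L d).
Proof.
  intros HL Hd HE Q (P&HP&HPQ). exists (IZR a, IZR b1). split; auto.
  destruct P as [x y]. unfold openU in HP. cbn [fst snd] in HP. destruct HP as [-> ->].
  eapply E_trans; eauto.
Qed.

Lemma star_closed a b d : In d (star' (CV,a,b)) -> closedU d (IZR a, IZR b).
Proof.
  cbn [star' In]. intros H.
  repeat (destruct H as [<-|H]; [unfold closedU; cbn [fst snd]; rewrite ?IZR_m1; lra|]).
  destruct H.
Qed.

Lemma adj_mk L v d d' e : subU (XoU L v) (XcU L d) -> subU (XoU L v) (XcU L d') -> cdim e = 1%nat ->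
  (forall P, openU e P -> closedU d P) -> (forall P, openU e P -> closedU d' P) -> adjU L v d d'.
Proof. intros. split; [|split]; auto. exists e. split; [|split]; auto; apply open_sub; auto. Qed.

Definition Conn L v := clos_refl_sym_trans cell (adjU L v).

Ltac ptw := let P := fresh in intros [? ?] P; unfold openU, closedU in *; cbn [fst snd] in *;
   rewrite ?IZR_m1 in *; lra.

Lemma K1 L a b b1 : (1<=L)%Z -> E L (IZR a, IZR b1) (IZR a, IZR b) ->
  forall d, In d (star' (CV,a,b1)) -> Conn L (CV,a,b) d (CVt,a,b1).
Proof.
  intros HL HE.
  assert (Vs: forall d, In d (star' (CV,a,b1)) -> subU (XoU L (CV,a,b)) (XcU L d)).
  { intros d Hd. eapply vsub; eauto. apply star_closed; auto. }
  assert (HVt: subU (XoU L (CV,a,b)) (XcU L (CVt,a,b1))) by (apply Vs; cbn; tauto).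
  assert (HF1: subU (XoU L (CV,a,b)) (XcU L (CF,a,b1))) by (apply Vs; cbn; tauto).
  assert (HH1: subU (XoU L (CV,a,b)) (XcU L (CH,a,b1))) by (apply Vs; cbn; tauto).
  assert (HF2: subU (XoU L (CV,a,b)) (XcU L (CF,a,b1-1)%Z)) by (apply Vs; cbn; tauto).
  assert (HVt2: subU (XoU L (CV,a,b)) (XcU L (CVt,a,b1-1)%Z)) by (apply Vs; cbn; tauto).
  assert (HF3: subU (XoU L (CV,a,b)) (XcU L (CF,a-1,b1-1)%Z)) by (apply Vs; cbn; tauto).
  assert (HH2: subU (XoU L (CV,a,b)) (XcU L (CH,a-1,b1)%Z)) by (apply Vs; cbn; tauto).
  assert (HF4: subU (XoU L (CV,a,b)) (XcU L (CF,a-1,b1)%Z)) by (apply Vs; cbn; tauto).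
  assert (A1: adjU L (CV,a,b) (CVt,a,b1) (CF,a,b1))
    by (apply adj_mk with (e:=(CVt,a,b1)); auto; ptw).
  assert (A2: adjU L (CV,a,b) (CF,a,b1) (CH,a,b1))
    by (apply adj_mk with (e:=(CH,a,b1)); auto; ptw).
  assert (A3: adjU L (CV,a,b) (CH,a,b1) (CF,a,b1-1)%Z)
    by (apply adj_mk with (e:=(CH,a,b1)); auto; ptw).
  assert (A4: adjU L (CV,a,b) (CF,a,b1-1)%Z (CVt,a,b1-1)%Z)
    by (apply adj_mk with (e:=(CVt,a,b1-1)%Z); auto; ptw).
  assert (A5: adjU L (CV,a,b) (CVt,a,b1-1)%Z (CF,a-1,b1-1)%Z)
    by (apply adj_mk with (e:=(CVt,a,b1-1)%Z); auto; ptw).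
  assert (A6: adjU L (CV,a,b) (CF,a-1,b1-1)%Z (CH,a-1,b1)%Z)
    by (apply adj_mk with (e:=(CH,a-1,b1)%Z); auto; ptw).
  assert (A7: adjU L (CV,a,b) (CH,a-1,b1)%Z (CF,a-1,b1)%Z)
    by (apply adj_mk with (e:=(CH,a-1,b1)%Z); auto; ptw).
  assert (A8: adjU L (CV,a,b) (CF,a-1,b1)%Z (CVt,a,b1))
    by (apply adj_mk with (e:=(CVt,a,b1)); auto; ptw).
  unfold Conn.
  assert (C1: clos_refl_sym_trans cell (adjU L (CV,a,b)) (CF,a,b1) (CVt,a,b1))
    by (apply rst_sym, rst_step; auto).
  assert (C2: clos_refl_sym_trans cell (adjU L (CV,a,b)) (CH,a,b1) (CVt,a,b1))
    by (eapply rst_trans; [apply rst_sym, rst_step, A2|exact C1]).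
  assert (C3: clos_refl_sym_trans cell (adjU L (CV,a,b)) (CF,a,b1-1)%Z (CVt,a,b1))
    by (eapply rst_trans; [apply rst_sym, rst_step, A3|exact C2]).
  assert (C4: clos_refl_sym_trans cell (adjU L (CV,a,b)) (CVt,a,b1-1)%Z (CVt,a,b1))
    by (eapply rst_trans; [apply rst_sym, rst_step, A4|exact C3]).
  assert (C8: clos_refl_sym_trans cell (adjU L (CV,a,b)) (CF,a-1,b1)%Z (CVt,a,b1))
    by (apply rst_step; auto).
  assert (C7: clos_refl_sym_trans cell (adjU L (CV,a,b)) (CH,a-1,b1)%Z (CVt,a,b1))
    by (eapply rst_trans; [apply rst_step, A7|exact C8]).
  assert (C6: clos_refl_sym_trans cell (adjU L (CV,a,b)) (CF,a-1,b1-1)%Z (CVt,a,b1))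
    by (eapply rst_trans; [apply rst_step, A6|exact C7]).
  intros d Hd. cbn [star' In] in Hd.
  repeat (destruct Hd as [<-|Hd]; [first [assumption|apply rst_refl]|]). destruct Hd.
Qed.

Lemma inblk_Z L e s l c : inblk L e s l (IZR c) ->
  ((3*L)^e*(3*l+s-1) <= c <= (3*L)^e*(3*l+s+1))%Z.
Proof. intros [H1 H2]. split; apply le_IZR; auto. Qed.

Lemma inblk_int L e s l c : ((3*L)^e*(3*l+s-1) <= c <= (3*L)^e*(3*l+s+1))%Z -> inblk L e s l (IZR c).
Proof. intros [H1 H2]. split; apply IZR_le; auto. Qed.

Lemma inblk_half L e s l c : ((3*L)^e*(3*l+s-1) <= c)%Z -> (c + 1 <= (3*L)^e*(3*l+s+1))%Z ->
  inblk L e s l (IZR c + /2).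
Proof.
  intros H1 H2. apply IZR_le in H1, H2. rewrite plus_IZR in H2. split; lra.
Qed.

Lemma Eshift L a e k s l c : lev (IZR a) e k s ->
  inblk L e s l (IZR c) -> inblk L e s l (IZR (c + (3*L)^e)) ->
  E L (IZR a, IZR c) (IZR a, IZR (c + (3*L)^e)).
Proof.
  intros Hl H1 H2. split; [reflexivity|right]. exists e, k, s, l, 1%Z. cbn [fst snd].
  split; [|split; [|split]]; auto. rewrite Z.mul_1_l, plus_IZR. reflexivity.
Qed.

Lemma glue L a e k s l c : lev (IZR a) e k s ->
  inblk L e s l (IZR c + /2) -> inblk L e s l (IZR (c + (3*L)^e) + /2) ->
  E L (cen (CVt,a,c)) (cen (shiftc (CVt,a,c) ((3*L)^e))).
Proof.
  intros Hl H1 H2. rewrite cen_shift. unfold cen, hx, hy. cbn [fst snd].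
  split; [reflexivity|right]. exists e, k, s, l, 1%Z. cbn [fst snd].
  rewrite Rplus_0_r. split; [|split; [|split]]; auto.
  - rewrite plus_IZR in H2. replace (IZR c + /2 + IZR ((3*L)^e)) with (IZR c + IZR ((3*L)^e) + /2) by ring.
    exact H2.
  - rewrite Z.mul_1_l. reflexivity.
Qed.

Lemma adj_glue L v c z : (1<=L)%Z -> E L (cen c) (cen (shiftc c z)) -> cdim c = 1%nat ->
  subU (XoU L v) (XcU L c) -> subU (XoU L v) (XcU L (shiftc c z)) -> adjU L v c (shiftc c z).
Proof.
  intros HL HE Hd H1 H2. split; [|split]; auto. exists c. split; [|split]; auto.
  - apply open_sub. apply open_closed.
  - intros Q HQ. apply (G L c z HL HE) in HQ. destruct HQ as (P&HP&HPQ).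
    exists P. split; auto. apply open_closed; auto.
Qed.

Lemma K2one L a b e k s l b1 : (1<=L)%Z -> lev (IZR a) e k s ->
  inblk L e s l (IZR b1) -> inblk L e s l (IZR (b1 + (3*L)^e)) ->
  E L (IZR a, IZR b1) (IZR a, IZR b) ->
  Conn L (CV,a,b) (CVt,a,b1) (CVt,a,b1 + (3*L)^e)%Z.
Proof.
  intros HL Hl H1 H2 HE.
  pose proof Hl as [He _]. pose proof (Mpos L e HL He) as HM.
  assert (HE2: E L (IZR a, IZR (b1 + (3*L)^e)) (IZR a, IZR b)).
  { eapply E_trans; eauto. apply E_sym. eapply Eshift; eauto. }
  apply inblk_Z in H1, H2.
  set (Me := ((3*L)^e)%Z) in *.
  assert (Hq: (Me*(3*l+s+1) = Me*(3*l+s-1) + 2*Me)%Z) by ring.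
  assert (Hq2: (Me*(3*l+s) = Me*(3*l+s-1) + Me)%Z) by ring.
  set (A := (Me*(3*l+s-1))%Z) in *.
  destruct (Z_le_gt_dec (b1 + Me + 1) (Me*(3*l+s+1))) as [Hc|Hc].
  - apply rst_step. apply (adj_glue L (CV,a,b) (CVt,a,b1) Me); auto.
    + eapply glue with (l:=l); eauto; apply inblk_half; fold Me A; lia.
    + apply vsub with (b1:=b1); auto. apply star_closed. cbn; tauto.
    + apply vsub with (b1:=(b1+Me)%Z); auto. apply star_closed. cbn; tauto.
  - assert (HVa: Conn L (CV,a,b) (CVt,a,b1-1)%Z (CVt,a,b1)) by (apply K1; auto; cbn; tauto).
    assert (HVb: Conn L (CV,a,b) (CVt,a,b1+Me-1)%Z (CVt,a,b1+Me)%Z) by (apply K1; auto; cbn; tauto).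
    replace (b1 + Me - 1)%Z with (b1 - 1 + Me)%Z in HVb by lia.
    eapply rst_trans; [apply rst_sym; exact HVa|].
    eapply rst_trans; [|exact HVb].
    apply rst_step. apply (adj_glue L (CV,a,b) (CVt,a,b1-1)%Z Me); auto.
    + eapply glue with (l:=l); eauto; apply inblk_half; fold Me A; lia.
    + apply vsub with (b1:=b1); auto. apply star_closed. cbn; tauto.
    + cbn [shiftc]. replace (b1 - 1 + Me)%Z with (b1 + Me - 1)%Z by lia.
      apply vsub with (b1 := (b1 + Me)%Z); auto. apply star_closed. cbn; tauto.
Qed.

Lemma K2 L a b b1 b2 : (1<=L)%Z -> E L (IZR a, IZR b1) (IZR a, IZR b) ->
  E L (IZR a, IZR b2) (IZR a, IZR b) -> Conn L (CV,a,b) (CVt,a,b1) (CVt,a,b2).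
Proof.
  intros HL H1 H2.
  assert (K2pos: forall c1 n e k s l, lev (IZR a) e k s -> (1 <= n <= 2)%Z ->
            inblk L e s l (IZR c1) -> inblk L e s l (IZR (c1 + n*(3*L)^e)) ->
            E L (IZR a, IZR c1) (IZR a, IZR b) ->
            Conn L (CV,a,b) (CVt,a,c1) (CVt,a,c1 + n*(3*L)^e)%Z).
  { intros c1 n e k s l Hl Hn Hb1 Hb2 HE.
    assert (n = 1 \/ n = 2)%Z as [ -> | -> ] by lia.
    - rewrite Z.mul_1_l in *. apply (K2one L a b e k s l); auto.
    - pose proof (inblk_Z _ _ _ _ _ Hb1). pose proof (inblk_Z _ _ _ _ _ Hb2).
      assert (Hm: inblk L e s l (IZR (c1 + (3*L)^e))) by (apply inblk_int; lia).
      eapply rst_trans. apply (K2one L a b e k s l); eauto.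
      replace (c1 + 2 * (3*L)^e)%Z with ((c1 + (3*L)^e) + (3*L)^e)%Z by ring.
      apply (K2one L a b e k s l); auto.
      + apply inblk_int. lia.
      + eapply E_trans; eauto. apply E_sym. eapply Eshift; eauto. }
  assert (H12: E L (IZR a, IZR b1) (IZR a, IZR b2)) by (eapply E_trans; eauto; apply E_sym; auto).
  destruct H12 as [_ [Hs|(e&k&s&l&n&Hl&Hb1&Hb2&Hy)]]; cbn [fst snd] in *.
  - apply eq_IZR in Hs. subst. apply rst_refl.
  - pose proof Hl as [He _].
    pose proof (n_bound L e s l (IZR b1) n HL He Hb1) as Hnb. rewrite <- Hy in Hnb.
    specialize (Hnb Hb2).
    rewrite <- plus_IZR in Hy. apply eq_IZR in Hy. subst b2.
    destruct (Z_lt_le_dec 0 n) as [Hp|Hp].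
    + apply K2pos with (e:=e) (k:=k) (s:=s) (l:=l); auto; lia.
    + destruct (Z.eq_dec n 0) as [->|Hn0].
      * rewrite Z.mul_0_l, Z.add_0_r. apply rst_refl.
      * apply rst_sym.
        replace b1 with ((b1 + n*(3*L)^e) + (-n)*(3*L)^e)%Z at 2 by ring.
        apply K2pos with (e:=e) (k:=k) (s:=s) (l:=l); auto; try lia.
        replace (b1 + n * (3 * L) ^ e + - n * (3 * L) ^ e)%Z with b1 by ring. auto.
Qed.

Lemma rst_rt {A} (R : A -> A -> Prop) x y : (forall x y, R x y -> R y x) ->
  clos_refl_sym_trans A R x y -> clos_refl_trans A R x y.
Proof.
  intros Hs H. induction H.
  - apply rt_step; auto.
  - apply rt_refl.
  - clear H. induction IHclos_refl_sym_trans.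
    + apply rt_step; auto.
    + apply rt_refl.
    + eapply rt_trans; eauto.
  - eapply rt_trans; eauto.
Qed.

Lemma adjU_sym L v d d' : adjU L v d d' -> adjU L v d' d.
Proof. intros (H1&H2&e&H3&H4&H5). split; [|split]; auto. exists e. auto. Qed.

Lemma vertex_cell L a b c : (1<=L)%Z -> (1 <= cdim c)%nat ->
  subU (XoU L (CV,a,b)) (XcU L c) -> exists b1, E L (IZR a, IZR b1) (IZR a, IZR b) /\ In c (star' (CV,a,b1)).
Proof.
  intros HL Hc H.
  assert (HV: XoU L (CV,a,b) (IZR a, IZR b)).
  { exists (IZR a, IZR b). split; [split; reflexivity|apply E_refl]. }
  destruct (H _ HV) as (P&HP&HE).
  pose proof (E_F1 _ _ _ (E_sym _ _ _ HE)) as [H1 [z H2]]. cbn [fst snd] in *.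
  exists (b+z)%Z. assert (HPe: P = (IZR a, IZR (b+z))).
  { destruct P; cbn [fst snd] in *. rewrite plus_IZR. congruence. }
  subst P. split; auto.
  assert (Hcl: closedU c (cen (CV,a,(b+z)%Z))).
  { unfold cen, hx, hy. rewrite !Rplus_0_r. auto. }
  destruct (star_spec _ _ Hcl) as [->|Hin]; auto. simpl in Hc. lia.
Qed.

Lemma L5u L a b c c' : (1<=L)%Z -> (1 <= cdim c)%nat -> (1 <= cdim c')%nat ->
  subU (XoU L (CV,a,b)) (XcU L c) -> subU (XoU L (CV,a,b)) (XcU L c') ->
  clos_refl_trans cell (adjU L (CV,a,b)) c c'.
Proof.
  intros HL Hc Hc' H H'.
  destruct (vertex_cell L a b c HL Hc H) as (b1&HE1&Hin1).
  destruct (vertex_cell L a b c' HL Hc' H') as (b2&HE2&Hin2).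
  apply rst_rt; [intros; apply adjU_sym; auto|].
  eapply rst_trans; [apply (K1 L a b b1); eauto|].
  eapply rst_trans; [apply (K2 L a b b1 b2); eauto|].
  apply rst_sym. apply (K1 L a b b2); eauto.
Qed.

Definition nbhd (c : cell) : list cell :=
  let '(_,a,b) := c in
  flat_map (fun da => flat_map (fun db => map (fun t => (t, a+da, b+db)%Z) (CV::CH::CVt::CF::nil))
    (-1::0::1::nil)%Z) (-1::0::1::nil)%Z.

Lemma nbhd_len c : (length (nbhd c) <= 36)%nat.
Proof. destruct c as [[t a] b]. simpl. lia. Qed.

Lemma closed_box c P : closedU c P -> let '(_,a,b) := c in
  IZR a <= fst P <= IZR a + 1 /\ IZR b <= snd P <= IZR b + 1.
Proof. destruct c as [[[] a] b]; unfold closedU; intros; lra. Qed.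

Lemma nbhd_spec c d x y z : closedU c (x,y) -> closedU d (x, y + IZR z) -> In d (nbhd (shiftc c z)).
Proof.
  intros H1 H2. apply closed_box in H1, H2. destruct c as [[t a] b], d as [[t' a'] b'].
  cbn [fst snd] in *. unfold shiftc, nbhd.
  assert (a' <= a + 1)%Z by (apply le_IZR; rewrite plus_IZR; lra).
  assert (a <= a' + 1)%Z by (apply le_IZR; rewrite plus_IZR; lra).
  assert (b' <= b + z + 1)%Z by (apply le_IZR; rewrite !plus_IZR; lra).
  assert (b + z <= b' + 1)%Z by (apply le_IZR; rewrite !plus_IZR; lra).
  apply in_flat_map. exists (a' - a)%Z. split; [cbn [In]; lia|].
  apply in_flat_map. exists (b' - (b+z))%Z. split; [cbn [In]; lia|].
  apply in_map_iff. exists t'. split.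
  - f_equal; [f_equal|]; lia.
  - destruct t'; cbn [In]; tauto.
Qed.

Definition meetU L c d := exists Q, XcU L c Q /\ XcU L d Q.

Lemma Lnb L c : (1<=L)%Z -> exists l, (length l <= 396)%nat /\ forall d, meetU L c d -> In d l.
Proof.
  intros HL. destruct c as [[t a] b] eqn:Hc.
  destruct (E_SL L (IZR a) HL) as [U1 HU1].
  destruct (E_SL L (IZR a + 1) HL) as [U2 HU2].
  set (sh := (0%Z :: map (fun n => n*U1)%Z fivelist ++ map (fun n => n*U2)%Z fivelist)).
  exists (flat_map (fun z => nbhd (shiftc c z)) sh). split.
  - pose proof (flat_map_len (fun z => nbhd (shiftc c z)) 36 sh (fun z => nbhd_len _)).
    assert (length sh = 11%nat) by reflexivity. lia.
  - intros d (Q&(P1&HP1&HE1)&(P2&HP2&HE2)).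
    assert (HE: E L P1 P2) by (eapply E_trans; eauto; apply E_sym; auto).
    destruct P1 as [x y], P2 as [x' y'].
    pose proof (E_F1 _ _ _ HE) as [Hf _]. cbn [fst snd] in Hf. subst x'.
    pose proof (closed_box _ _ HP1) as Hb. cbn [fst snd] in Hb. destruct Hb as [[Hx1 Hx2] _].
    apply in_flat_map.
    destruct (Req_dec x (IZR a)) as [->|Hxa].
    + destruct (HU1 _ _ HE) as (n&Hn&Hy). exists (n*U1)%Z. split.
      * right. apply in_or_app. left. apply (in_map (fun n => (n*U1)%Z)). apply in_five; auto.
      * subst c. eapply nbhd_spec; eauto. rewrite <- Hy. eauto.
    + destruct (Req_dec x (IZR a + 1)) as [->|Hxa1].
      * destruct (HU2 _ _ HE) as (n&Hn&Hy). exists (n*U2)%Z. split.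
        -- right. apply in_or_app. right. apply (in_map (fun n => (n*U2)%Z)). apply in_five; auto.
        -- subst c. eapply nbhd_spec; eauto. rewrite <- Hy. eauto.
      * apply E_F2 in HE. 2:{ cbn [fst]. apply (nonint_between a). lra. }
        injection HE as HE. subst y'. exists 0%Z. split; [left; reflexivity|].
        subst c. eapply nbhd_spec; eauto. replace (y + IZR 0) with y by (change (IZR 0) with 0; ring). eauto.
Qed.

Lemma tr_lt a x T : 0 < T -> (a * /T < x <-> a < x * T).
Proof. intros HT. split; intros H.
  - apply (Rmult_lt_compat_r T) in H; auto. replace (a * /T * T) with a in H by (field; lra). auto.
  - apply (Rmult_lt_compat_r (/T)) in H; [|apply Rinv_0_lt_compat; auto].
    replace (x * T * /T) with x in H by (field; lra). auto.
Qed.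
Lemma tr_lt' a x T : 0 < T -> (x < a * /T <-> x * T < a).
Proof. intros HT. split; intros H.
  - apply (Rmult_lt_compat_r T) in H; auto. replace (a * /T * T) with a in H by (field; lra). auto.
  - apply (Rmult_lt_compat_r (/T)) in H; [|apply Rinv_0_lt_compat; auto].
    replace (x * T * /T) with x in H by (field; lra). auto.
Qed.
Lemma tr_le a x T : 0 < T -> (a * /T <= x <-> a <= x * T).
Proof. intros HT. split; intros H.
  - apply (Rmult_le_compat_r T) in H; [|lra]. replace (a * /T * T) with a in H by (field; lra). auto.
  - apply (Rmult_le_compat_r (/T)) in H; [|left; apply Rinv_0_lt_compat; auto].
    replace (x * T * /T) with x in H by (field; lra). auto.
Qed.
Lemma tr_le' a x T : 0 < T -> (x <= a * /T <-> x * T <= a).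
Proof. intros HT. split; intros H.
  - apply (Rmult_le_compat_r T) in H; [|lra]. replace (a * /T * T) with a in H by (field; lra). auto.
  - apply (Rmult_le_compat_r (/T)) in H; [|left; apply Rinv_0_lt_compat; auto].
    replace (x * T * /T) with x in H by (field; lra). auto.
Qed.
Lemma tr_eq a x T : 0 < T -> (x = a * /T <-> x * T = a).
Proof. intros HT. split; intros H.
  - subst. field. lra.
  - rewrite <- H. field. lra.
Qed.

Lemma T_open L j c p : (1<=L)%Z -> (openY L j c p <-> openU c (u L j p)).
Proof.
  intros HL. pose proof (mv_pos L HL) as HM.
  assert (H4: 0 < powerRZ 4 j) by (apply powerRZ_lt; lra).
  assert (HMj: 0 < powerRZ (m_v L) j) by (apply powerRZ_lt; lra).
  destruct c as [[t a] b], p as [x y].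
  unfold openY, openU, u, sx, sy, m_h. cbn [fst snd]. rewrite !powerRZ_neg'.
  rewrite !plus_IZR.
  destruct t; rewrite ?(tr_lt _ _ _ H4), ?(tr_lt' _ _ _ H4), ?(tr_eq _ _ _ H4),
     ?(tr_lt _ _ _ HMj), ?(tr_lt' _ _ _ HMj), ?(tr_eq _ _ _ HMj); tauto.
Qed.

Lemma T_closed L j c p : (1<=L)%Z -> (closedY L j c p <-> closedU c (u L j p)).
Proof.
  intros HL. pose proof (mv_pos L HL) as HM.
  assert (H4: 0 < powerRZ 4 j) by (apply powerRZ_lt; lra).
  assert (HMj: 0 < powerRZ (m_v L) j) by (apply powerRZ_lt; lra).
  destruct c as [[t a] b], p as [x y].
  unfold closedY, closedU, u, sx, sy, m_h. cbn [fst snd]. rewrite !powerRZ_neg'.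
  rewrite !plus_IZR.
  destruct t; rewrite ?(tr_le _ _ _ H4), ?(tr_le' _ _ _ H4), ?(tr_eq _ _ _ H4),
     ?(tr_le _ _ _ HMj), ?(tr_le' _ _ _ HMj), ?(tr_eq _ _ _ HMj); tauto.
Qed.

Lemma T_Xopen L j c q : (1<=L)%Z -> (Xopen L j c q <-> XoU L c (u L j q)).
Proof.
  intros HL. split.
  - intros (p&Hp&HR). exists (u L j p). split; [apply T_open; auto|apply Rj_E; auto].
  - intros (P&HP&HE). exists (v L j P). rewrite <- (uv L j P HL) in HP, HE. split.
    + apply T_open; auto.
    + apply Rj_E; auto.
Qed.

Lemma T_Xclosed L j c q : (1<=L)%Z -> (Xclosed L j c q <-> XcU L c (u L j q)).
Proof.
  intros HL. split.
  - intros (p&Hp&HR). exists (u L j p). split; [apply T_closed; auto|apply Rj_E; auto].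
  - intros (P&HP&HE). exists (v L j P). rewrite <- (uv L j P HL) in HP, HE. split.
    + apply T_closed; auto.
    + apply Rj_E; auto.
Qed.

Lemma T_sub L j (A B : pt -> Prop) A' B' : (1<=L)%Z -> (forall q, A q <-> A' (u L j q)) ->
  (forall q, B q <-> B' (u L j q)) -> (subset A B <-> subU A' B').
Proof.
  intros HL HA HB. split.
  - intros H Q HQ. rewrite <- (uv L j Q HL) in *. apply HB, H, HA. auto.
  - intros H q Hq. apply HB, H, HA. auto.
Qed.

Lemma T_seteq L j (A B : pt -> Prop) A' B' : (1<=L)%Z -> (forall q, A q <-> A' (u L j q)) ->
  (forall q, B q <-> B' (u L j q)) -> (seteq A B <-> seqU A' B').
Proof.
  intros HL HA HB. split.
  - intros H Q. rewrite <- (uv L j Q HL). rewrite <- HA, <- HB. apply H.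
  - intros H q. rewrite HA, HB. apply H.
Qed.

Lemma T_oc L j c d : (1<=L)%Z -> (subset (Xopen L j c) (Xclosed L j d) <-> subU (XoU L c) (XcU L d)).
Proof. intros HL. apply (T_sub L j); [auto|intros; apply T_Xopen; auto|intros; apply T_Xclosed; auto]. Qed.

Lemma T_oo L j c d : (1<=L)%Z -> (seteq (Xopen L j c) (Xopen L j d) <-> seqU (XoU L c) (XoU L d)).
Proof. intros HL. apply (T_seteq L j); [auto|intros; apply T_Xopen; auto|intros; apply T_Xopen; auto]. Qed.

Lemma u_succ L j p : (1<=L)%Z -> u L (j+1) p = (fst (u L j p) * 4, snd (u L j p) * m_v L).
Proof.
  intros HL. pose proof (mv_pos L HL). unfold u. cbn [fst snd].
  rewrite !powerRZ_add by lra. simpl. f_equal; ring.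
Qed.

Lemma down L X Y X' Y' : (1<=L)%Z -> E L (X*4, Y*m_v L) (X'*4, Y'*m_v L) ->
  E L (X,Y) (X',Y') \/ ((forall a, X <> IZR a) /\ X' = X /\
     exists n, n <> 0%Z /\ (-2 <= n <= 2)%Z /\ Y' * m_v L = Y * m_v L + IZR n).
Proof.
  intros HL [H1 H2]. cbn [fst snd] in *. pose proof (mv_pos L HL) as HM.
  assert (HX: X' = X) by lra. subst X'.
  destruct H2 as [H2|(e&k&s&l&n&[He [Hs Hl]]&Hb1&Hb2&Hy)]; cbn [fst snd] in *.
  - left. assert (Y' = Y) by (apply (Rmult_eq_reg_r (m_v L)); lra). subst. apply E_refl.
  - destruct (Z.eq_dec e 0) as [->|He0].
    + assert (Hn := n_bound L 0 s l (Y * m_v L) n HL (Z.le_refl 0) Hb1). rewrite <- Hy in Hn.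
      specialize (Hn Hb2). rewrite Z.pow_0_r, Z.mul_1_r in Hy.
      destruct (Z.eq_dec n 0) as [->|Hn0].
      * left. assert (Y' = Y) by (apply (Rmult_eq_reg_r (m_v L)); simpl in Hy; lra). subst. apply E_refl.
      * right. split; [|split; [reflexivity|exists n; auto]].
        intros a Ha. subst X. rewrite Z.pow_0_r, Z.mul_1_l in Hl.
        rewrite <- (mult_IZR a 4) in Hl. apply eq_IZR in Hl. lia.
    + left. set (e' := (e - 1)%Z). assert (He': e = Z.succ e') by (unfold e'; lia).
      unfold inblk in *. rewrite He' in *. rewrite (Z.pow_succ_r 4 e') in Hl by lia. rewrite (Z.pow_succ_r (3*L) e') in Hb1, Hb2, Hy by lia.
      rewrite mv_IZR in *.
      assert (HM3: 0 < IZR (3*L)) by lra.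
      assert (Hsplit: forall c, IZR (3*L*(3*L)^e' * c) = IZR (3*L) * IZR ((3*L)^e' * c)).
      { intros c. rewrite <- mult_IZR. f_equal. ring. }
      split; [reflexivity|right]. exists e', k, s, l, n. cbn [fst snd].
      unfold inblk in *. split; [|split; [|split]].
      * split; [lia|split; auto].
        rewrite <- Z.mul_assoc, mult_IZR in Hl. lra.
      * rewrite !Hsplit in Hb1.
        destruct Hb1. split; apply (Rmult_le_reg_r (IZR (3*L))); auto; lra.
      * rewrite !Hsplit in Hb2.
        destruct Hb2. split; apply (Rmult_le_reg_r (IZR (3*L))); auto; lra.
      * replace (n * (3*L * (3*L)^e'))%Z with (3*L * (n * (3*L)^e'))%Z in Hy by ring.
        rewrite (mult_IZR (3*L) (n*(3*L)^e')) in Hy. rewrite !(mult_IZR 3 L) in *. apply (Rmult_eq_reg_r (3 * IZR L)); [|lra]. lra.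
Qed.

Lemma skel_nonint L c P0 : (1<=L)%Z -> (cdim c <= 1)%nat -> XoU L c P0 ->
  (forall a, fst P0 <> IZR a) -> exists b, snd P0 = IZR b.
Proof.
  intros HL Hc (P&HP&HE) Hn.
  pose proof (E_F1 _ _ _ HE) as [Hf _].
  apply E_F2 in HE; [|intros a Ha; apply (Hn a); congruence]. subst P0.
  destruct c as [[t a] b]. destruct t; unfold openU in HP; simpl in Hc.
  - exfalso. apply (Hn a). apply HP.
  - exists b. apply HP.
  - exfalso. apply (Hn a). apply HP.
  - lia.
Qed.

Lemma Rj_succ L j p q : (1<=L)%Z -> Rj L (j+1) p q -> Rj L j p q \/
  ((forall a, fst (u L j p) <> IZR a) /\ fst (u L j q) = fst (u L j p) /\
   exists n, n <> 0%Z /\ (-2 <= n <= 2)%Z /\ snd (u L j q) * m_v L = snd (u L j p) * m_v L + IZR n).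
Proof.
  intros HL H. apply Rj_E in H; auto. rewrite !u_succ in H by auto.
  destruct (down L _ _ _ _ HL H) as [H'|H'].
  - left. apply (proj2 (Rj_E L j p q HL)). destruct (u L j p), (u L j q); exact H'.
  - right. exact H'.
Qed.

Fixpoint Bn (N : nat) : nat := match N with O => O | S n => S (396 * Bn n) end.

Lemma meet_U L j c d : (1<=L)%Z -> meet L j c d -> meetU L c d.
Proof.
  intros HL (q&H1&H2). exists (u L j q). split; apply T_Xclosed; auto.
Qed.

Lemma list_nb L : (1<=L)%Z -> forall Rl, exists big, (length big <= 396 * length Rl)%nat /\
  forall d c, In d Rl -> meetU L d c -> In c big.
Proof.
  intros HL Rl. induction Rl as [|a Rl IH].
  - exists nil. split; [simpl; lia|]. intros d c [].
  - destruct IH as (big&Hb&Hbig). destruct (Lnb L a HL) as (la&Hla&Hl).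
    exists (la ++ big). split; [rewrite length_app; simpl; lia|].
    intros d c [<-|Hd] Hm; apply in_or_app; [left|right]; eauto.
Qed.

Lemma reach_list L j : (1<=L)%Z -> forall N c0, exists R, (length R <= Bn N)%nat /\
  forall c, reach L j c0 N c -> In c R.
Proof.
  intros HL N. induction N as [|n IH]; intros c0.
  - exists nil. split; [simpl; lia|]. intros c [].
  - destruct (IH c0) as (R&HR&HRin). destruct (list_nb L HL R) as (big&Hb&Hbig).
    exists (c0 :: big). split; [simpl; lia|].
    intros c [->|(d&Hd&Hm)]; [left; auto|right].
    apply (Hbig d); auto. apply (meet_U L j); auto.
Qed.

Lemma rt_mono {A} (R1 R2 : A -> A -> Prop) x y : (forall a b, R1 a b -> R2 a b) ->
  clos_refl_trans A R1 x y -> clos_refl_trans A R2 x y.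
Proof.
  intros H Hr. induction Hr; [apply rt_step; auto|apply rt_refl|eapply rt_trans; eauto].
Qed.

Theorem mainTheorem5 (L : Z) (HL : (100 <= L)%Z) :
  (forall j : Z,
    (forall p q, skel1 L j p -> skel1 L j q -> Rj L (j + 1) p q -> Rj L j p q) /\
    (forall a b p, Xopen L j (CV, a, b) p ->
       forall q, Rj L (j + 1) p q -> Rj L j p q) /\
    (forall p : pt, exists l : list pt, (length l <= 3)%nat /\
       forall q, Rj L j p q -> In q l) /\
    (forall c : cell, atmost_distinct 24 (in_link L j c) (Xopen L j)) /\
    (forall (a b : Z) (c c' : cell),
       (1 <= cdim c)%nat -> (1 <= cdim c')%nat ->
       subset (Xopen L j (CV, a, b)) (Xclosed L j c) ->
       subset (Xopen L j (CV, a, b)) (Xclosed L j c') ->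
       clos_refl_trans cell (adj_at L j (CV, a, b)) c c') /\
    (forall c : cell,
       atmost_distinct 9 (fun d => subset (Xopen L j d) (Xclosed L j c)) (Xopen L j)) /\
    (forall a b : Z, exists l : list (Z * Z), (length l <= 27)%nat /\
       forall q, Xclosed L j (CF, a, b) q ->
         exists ab, In ab l /\ closedY L j (CF, fst ab, snd ab) q)) /\
  (forall N : nat, exists C : nat, forall (j : Z) (c0 : cell),
     atmost_distinct C (fun d => subset (Xopen L j d) (ball L j c0 N)) (Xopen L j)).
Proof.
  assert (HL1: (1 <= L)%Z) by lia.
  split.
  - intros j. split; [|split; [|split; [|split; [|split; [|split]]]]].
    +
      intros p q (c&Hc&Hp) (c'&Hc'&Hq) HR.
      destruct (Rj_succ L j p q HL1 HR) as [H|(Hni&Hf&n&Hn0&Hnb&Hy)]; auto. exfalso.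
      apply T_Xopen in Hp, Hq; auto.
      destruct (skel_nonint L c _ HL1 Hc Hp Hni) as [b Hb].
      destruct (skel_nonint L c' _ HL1 Hc' Hq) as [b' Hb'].
      { rewrite Hf. auto. }
      rewrite Hb, Hb', mv_IZR in Hy. rewrite <- !mult_IZR, <- plus_IZR in Hy.
      apply eq_IZR in Hy. nia.
    +
      intros a b p Hp q HR.
      destruct (Rj_succ L j p q HL1 HR) as [H|(Hni&_)]; auto. exfalso.
      apply T_Xopen in Hp; auto. destruct Hp as (P&HP&HE).
      pose proof (E_F1 _ _ _ HE) as [Hf _].
      destruct P as [x y]. unfold openU in HP. cbn [fst snd] in *. destruct HP as [-> _].
      apply (Hni a). auto.
    +
      intros p. destruct (E_F3 L (u L j p) HL1) as (zs&Hlen&Hzs).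
      exists (map (fun z => v L j (fst (u L j p), snd (u L j p) + IZR z)) zs).
      split; [rewrite length_map; auto|].
      intros q HR. apply Rj_E in HR; auto. destruct (Hzs _ HR) as [Hf (z&Hz&Hs)].
      apply in_map_iff. exists z. split; auto.
      rewrite <- Hf, <- Hs. rewrite <- surjective_pairing. apply vu; auto.
    +
      intros c. destruct (L4u L c HL1) as (l&Hlen&Hl). exists l. split; auto.
      intros d [Hne Hsub]. exists d. split.
      * apply Hl.
        -- intros Hs. apply Hne. apply (T_oo L j d c HL1). auto.
        -- apply (T_oc L j c d HL1). auto.
      * intros q; tauto.
    +
      intros a b c c' Hc Hc' H H'.
      apply (T_oc L j) in H, H'; auto.
      apply (rt_mono (adjU L (CV,a,b))).
      * intros d d' (H1&H2&e&He&H3&H4). split; [|split].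
        -- apply (T_oc L j); auto.
        -- apply (T_oc L j); auto.
        -- exists e. split; auto. split; apply (T_oc L j); auto.
      * apply L5u; auto.
    +
      intros c. exists (faces c). split; [apply faces_len|].
      intros d Hd. apply (T_oc L j) in Hd; auto.
      destruct (L6u L c d HL1 (Hd _ (cen_Xo L d))) as (c'&Hc'&Hs).
      exists c'. split; auto. apply (T_oo L j); auto.
    +
      intros a b. destruct (L8u L a b HL1) as (l&Hlen&Hl). exists l. split; auto.
      intros q Hq. apply T_Xclosed in Hq; auto. destruct (Hl _ Hq) as (ab&Hab&Hc).
      exists ab. split; auto. apply T_closed; auto.
  -
    intros N. exists (9 * Bn N)%nat. intros j c0.
    destruct (reach_list L j HL1 N c0) as (R&HR&HRin).
    exists (flat_map faces R). split.
    + pose proof (flat_map_len faces 9 R faces_len). lia.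
    + intros d Hd.
      assert (Hq: Xopen L j d (v L j (cen d))).
      { apply T_Xopen; auto. rewrite uv; auto. apply cen_Xo. }
      destruct (Hd _ Hq) as (c&Hreach&Hcl).
      apply T_Xclosed in Hcl; auto. rewrite uv in Hcl; auto.
      destruct (L6u L c d HL1 Hcl) as (c'&Hc'&Hs).
      exists c'. split.
      * apply in_flat_map. exists c. auto.
      * apply (T_oo L j); auto.
Qed.

Print Assumptions mainTheorem5.
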